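(* Let $T$ be a finite nonempty set with a metric $\mathrm{dist}$, let $\Gamma:\mathbb{R}\to[0,1]$ be nondecreasing and subadditive with $\Gamma(x)=0$ iff $x=0$, and set $\gamma_{uv}=\Gamma(\mathrm{dist}(u,v))$ for $u,v\in T$. Let $\widehat\phi\in\mathbb{R}^{T}$, $\delta>0$, $$\mathcal{U}_{\mathrm{SB}}=\{\phi\in[0,1]^{T}:\ |\phi_v-\widehat\phi_v|\le\delta\ \ \forall v\in T,\ \ |\phi_v-\phi_u|\le\gamma_{vu}\ \ \forall u,v\in T\},$$ assumed nonempty, and let $\underline\phi_v=\max_{u\in T}\{\underline\phi^0_u-\gamma_{uv}\}$, $\bar\phi_v=\min_{u\in T}\{\bar\phi^0_u+\gamma_{vu}\}$ for $v\in T$, where $\underline\phi^0_u=\max\{0,\widehat\phi_u-\delta\}$ and $\bar\phi^0_u=\min\{1,\widehat\phi_u+\delta\}$. Then for all $u,v\in T$, $$P_{\{v,u\}}(\mathcal{U}_{\mathrm{SB}})=\{(\phi_v,\phi_u):\ \underline\phi_v\le\phi_v\le\bar\phi_v,\ \ \underline\phi_u\le\phi_u\le\bar\phi_u,\ \ |\phi_v-\phi_u|\le\gamma_{vu}\}.$$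
   Context: For $S\subseteq\mathbb{R}^{T}$ and $I\subseteq T$, $P_I(S)=\{\phi_I:\phi\in S\}$ denotes the projection of $S$ onto the coordinates in $I$. *)

(* Defs.v *)
From HB Require Import structures.
From mathcomp Require Import all_boot all_order all_algebra.
From mathcomp Require Import reals.
Set Implicit Arguments. Unset Strict Implicit. Unset Printing Implicit Defensive.
Import Order.TTheory GRing.Theory Num.Theory.
Local Open Scope ring_scope.

Section Defs.
Variables (R : realType) (T : finType).

(* maximum / minimum of f over the finite type T; the seed f t0 is itself one
   of the terms, so the value is the true max / min over T for any t0. *)
Definition maxT (f : T -> R) (t0 : T) : R := \big[Num.max/f t0]_(u : T) f u.
Definition minT (f : T -> R) (t0 : T) : R := \big[Num.min/f t0]_(u : T) f u.

Definition gam (Gamma : R -> R) (dist : T -> T -> R) (u v : T) : R :=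
  Gamma (dist u v).

Definition U_SB (Gamma : R -> R) (dist : T -> T -> R) (phihat : T -> R)
    (delta : R) (phi : T -> R) : Prop :=
  (forall v, 0 <= phi v <= 1) /\
  (forall v, `|phi v - phihat v| <= delta) /\
  (forall u v, `|phi v - phi u| <= gam Gamma dist v u).

Definition phi0_lo (phihat : T -> R) (delta : R) (u : T) : R :=
  Num.max 0 (phihat u - delta).
Definition phi0_up (phihat : T -> R) (delta : R) (u : T) : R :=
  Num.min 1 (phihat u + delta).

Definition phi_lo (Gamma : R -> R) (dist : T -> T -> R) (phihat : T -> R)
    (delta : R) (v : T) : R :=
  maxT (fun u => phi0_lo phihat delta u - gam Gamma dist u v) v.
Definition phi_up (Gamma : R -> R) (dist : T -> T -> R) (phihat : T -> R)
    (delta : R) (v : T) : R :=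
  minT (fun u => phi0_up phihat delta u + gam Gamma dist v u) v.

End Defs.

(* Main.v *)
Require Import Defs.
From HB Require Import structures.
From mathcomp Require Import all_boot all_order all_algebra.
From mathcomp Require Import reals.
From mathcomp Require Import lra.
Import Order.TTheory GRing.Theory Num.Theory.
Local Open Scope ring_scope.

Section Aux.
Variables (R : realType) (T : finType).

Lemma maxT_ge (f : T -> R) t0 u : f u <= maxT f t0.
Proof.
rewrite /maxT; have : u \in index_enum T by apply: mem_index_enum.
elim: (index_enum T) => [//|i r IH]; rewrite big_cons inE => /orP [/eqP ->|h].
  by rewrite le_max lexx.
by rewrite le_max (IH h) orbT.
Qed.

Lemma maxT_le (f : T -> R) t0 c : (forall u, f u <= c) -> maxT f t0 <= c.
Proof.
move=> H; rewrite /maxT; elim: (index_enum T) => [|i r IH]; first by rewrite big_nil.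
by rewrite big_cons ge_max H IH.
Qed.

Lemma minT_le (f : T -> R) t0 u : minT f t0 <= f u.
Proof.
rewrite /minT; have : u \in index_enum T by apply: mem_index_enum.
elim: (index_enum T) => [//|i r IH]; rewrite big_cons inE => /orP [/eqP ->|h].
  by rewrite ge_min lexx.
by rewrite ge_min (IH h) orbT.
Qed.

Lemma minT_ge (f : T -> R) t0 c : (forall u, c <= f u) -> c <= minT f t0.
Proof.
move=> H; rewrite /minT; elim: (index_enum T) => [|i r IH]; first by rewrite big_nil.
by rewrite big_cons le_min H IH.
Qed.
Lemma lip_max (p1 p2 q1 q2 c : R) : p1 <= q1 + c -> p2 <= q2 + c ->
  Num.max p1 p2 <= Num.max q1 q2 + c.
Proof. move=> h1 h2; case: (leP p1 p2) => h3; case: (leP q1 q2) => h4; lra. Qed.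
Lemma lip_min (p1 p2 q1 q2 c : R) : p1 <= q1 + c -> p2 <= q2 + c ->
  Num.min p1 p2 <= Num.min q1 q2 + c.
Proof. move=> h1 h2; case: (leP p1 p2) => h3; case: (leP q1 q2) => h4; lra. Qed.
End Aux.

Theorem proposition2p2 (R : realType) (T : finType) (dist : T -> T -> R)
  (Gamma : R -> R) (phihat : T -> R) (delta : R) :
  (0 < #|T|)%N ->
  (* dist is a metric on T *)
  (forall u v, 0 <= dist u v) ->
  (forall u v, dist u v = 0 <-> u = v) ->
  (forall u v, dist u v = dist v u) ->
  (forall u v w, dist u w <= dist u v + dist v w) ->
  (* Gamma : [0,oo) -> [0,1], nondecreasing, subadditive, Gamma x = 0 iff x = 0 *)
  (forall x, 0 <= x -> 0 <= Gamma x <= 1) ->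
  (forall x y, 0 <= x -> x <= y -> Gamma x <= Gamma y) ->
  (forall x y, 0 <= x -> 0 <= y -> Gamma (x + y) <= Gamma x + Gamma y) ->
  (forall x, 0 <= x -> (Gamma x = 0 <-> x = 0)) ->
  0 < delta ->
  (exists phi : T -> R, U_SB Gamma dist phihat delta phi) ->
  forall u v : T, forall a b : R,
    (exists phi : T -> R, U_SB Gamma dist phihat delta phi /\
                          phi v = a /\ phi u = b)
    <->
    (phi_lo Gamma dist phihat delta v <= a <= phi_up Gamma dist phihat delta v /\
     phi_lo Gamma dist phihat delta u <= b <= phi_up Gamma dist phihat delta u /\
     `|a - b| <= gam Gamma dist v u).
Proof.
move=> _ dnn d0 dsym dtri G01 Gmon Gsub G0 dpos [phi0 Hphi0] u v a b.
set g := gam Gamma dist.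
set L := phi_lo Gamma dist phihat delta.
set U := phi_up Gamma dist phihat delta.
have g0 x : g x x = 0.
  rewrite /g /gam; have -> : dist x x = 0 by apply/d0.
  by apply/G0.
have gsym x y : g x y = g y x by rewrite /g /gam dsym.
have gnn x y : 0 <= g x y by rewrite /g /gam; case/andP: (G01 _ (dnn x y)).
have gtri x y z : g x z <= g x y + g y z.
  rewrite /g /gam; apply: le_trans (Gsub _ _ (dnn x y) (dnn y z)).
  by apply: Gmon; [exact: dnn | exact: dtri].
have Llb w x : phi0_lo phihat delta w - g w x <= L x.
  rewrite /L /phi_lo /g; exact: maxT_ge.
have Lub x c : (forall w, phi0_lo phihat delta w - g w x <= c) -> L x <= c.
  rewrite /L /phi_lo /g; exact: maxT_le.
have Uub w x : U x <= phi0_up phihat delta w + g x w.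
  rewrite /U /phi_up /g; exact: minT_le.
have Ulb x c : (forall w, c <= phi0_up phihat delta w + g x w) -> c <= U x.
  rewrite /U /phi_up /g; exact: minT_ge.
have inb phi : U_SB Gamma dist phihat delta phi -> forall w, L w <= phi w <= U w.
  case=> H01 [Hd Hl] w; apply/andP; split.
    apply: Lub => x; have := Hl w x; rewrite -/g ler_norml => /andP [h1 h2].
    have := Hd x; rewrite ler_norml => /andP [h3 h4].
    case/andP: (H01 x) => h5 h6.
    rewrite /phi0_lo; case: (leP 0 (phihat x - delta)) => h7; lra.
  apply: Ulb => x; have := Hl x w; rewrite -/g ler_norml => /andP [h1 h2].
  have := Hd x; rewrite ler_norml => /andP [h3 h4].
  case/andP: (H01 x) => h5 h6.
  rewrite /phi0_up; case: (leP 1 (phihat x + delta)) => h7; lra.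
split.
  move=> [phi [Hp [<- <-]]]; split; first exact: inb.
  split; first exact: inb.
  by case: Hp => _ [_ ->].
move=> [/andP [Lva aUv] [/andP [Lub' bUu] hab]].
have LU w : L w <= U w by case/andP: (inb _ Hphi0 w) => h1 h2; apply: le_trans h2.
have L0 w : 0 <= L w /\ phihat w - delta <= L w.
  have := Llb w w; rewrite g0 /phi0_lo; case: (leP 0 (phihat w - delta)) => h; lra.
have U1 w : U w <= 1 /\ U w <= phihat w + delta.
  have := Uub w w; rewrite g0 /phi0_up; case: (leP 1 (phihat w + delta)) => h; lra.
have LL x y : L x <= L y + g x y.
  apply: Lub => w; have := Llb w y; have := gtri w x y; lra.
have UL x y : U x <= U y + g x y.
  rewrite -lerBlDr; apply: Ulb => w; have := Uub w x; have := gtri x y w; lra.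
pose m w := Num.max (a - g v w) (b - g u w).
have mL x y : m x <= m y + g x y.
  rewrite /m; have := gtri v x y; have := gtri u x y => h1 h2.
  apply: lip_max; lra.
pose phi w := Num.max (L w) (Num.min (U w) (m w)).
have pL x y : phi x <= phi y + g x y.
  by rewrite /phi; apply: lip_max => //; apply: lip_min.
have pB w : L w <= phi w <= U w.
  rewrite /phi le_max lexx /= ge_max LU /=; by rewrite ge_min lexx.
have hab' : - g v u <= a - b <= g v u by rewrite -ler_norml.
case/andP: hab' => hab1 hab2.
exists phi; split; last split.
- split; [|split].
  + move=> w; case/andP: (pB w) => h1 h2; case: (L0 w) => h3 h4;
    case: (U1 w) => h5 h6; apply/andP; lra.
  + move=> w; case/andP: (pB w) => h1 h2; case: (L0 w) => h3 h4;
    case: (U1 w) => h5 h6; rewrite ler_norml; apply/andP; lra.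
  + move=> x y; rewrite -/g ler_norml; have := pL x y; have := pL y x;
    rewrite (gsym x y); move=> h1 h2; apply/andP; lra.
- have mv : m v = a.
    rewrite /m g0; have := gsym u v => h0.
    case: (leP (a - 0) (b - g u v)) => h1; lra.
  rewrite /phi mv; rewrite (_ : Num.min (U v) a = a); last by case: (leP (U v) a) => h; lra.
  by case: (leP (L v) a) => h; lra.
- have mu : m u = b.
    rewrite /m g0; have := gsym u v => h0.
    case: (leP (a - g v u) (b - 0)) => h1; lra.
  rewrite /phi mu; rewrite (_ : Num.min (U u) b = b); last by case: (leP (U u) b) => h; lra.
  by case: (leP (L u) b) => h; lra.
Qed.
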